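(* Let $(A,C,k)$ be an instance and let $W$ be an exhaustive committee that is $B$-priceable for some budget $B\ge k$. Then the representation ratio of $W$ is at least $\frac12$.
   Context: An instance $(A,C,k)$ consists of a finite nonempty candidate set $C$, voters $N=\{1,\dots,n\}$, approval sets $A_i\subseteq C$, and a committee size $1\le k\le|C|$. $N_c=\{i:c\in A_i\}$. A committee $W\subseteq C$ is exhaustive if $|W|=k$. $\mathrm{cov}(W)=|\{i:A_i\cap W\ne\emptyset\}|$; the representation ratio is $\mathrm{cov}(W)/\max\{\mathrm{cov}(W'):|W'|=k\}$. For $B>0$, $W$ is $B$-priceable if there are $p_i:C\to\mathbb{R}_{\ge0}$ ($i\in N$) with: $p_i(c)=0$ for $c\notin A_i$; $\sum_c p_i(c)\le B/n$ for all $i$; $\sum_i p_i(c)=1$ for $c\in W$; $\sum_i p_i(c)=0$ for $c\notin W$; and $\sum_{i\in N_c}\left(\frac Bn-\sum_{c'\in C}p_i(c')\right)\le1$ for every $c\notin W$. *)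

(* Defs.v *)
From mathcomp Require Import all_boot all_order all_algebra.
Set Implicit Arguments. Unset Strict Implicit. Unset Printing Implicit Defensive.
Import Order.TTheory GRing.Theory Num.Theory.
Local Open Scope ring_scope.

Definition supporters (C : finType) (n : nat) (A : 'I_n -> {set C}) (c : C)
  : {set 'I_n} := [set i | c \in A i].

Definition cov (C : finType) (n : nat) (A : 'I_n -> {set C}) (W : {set C}) : nat :=
  #|[set i : 'I_n | A i :&: W != set0]|.

Definition max_cov (C : finType) (n : nat) (A : 'I_n -> {set C}) (k : nat) : nat :=
  (\max_(W' : {set C} | #|W'| == k) cov A W')%N.

Definition representation_ratio (R : realFieldType) (C : finType) (n : nat)
  (A : 'I_n -> {set C}) (k : nat) (W : {set C}) : R :=
  (cov A W)%:R / (max_cov A k)%:R.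

Definition priceable (R : realFieldType) (C : finType) (n : nat)
  (A : 'I_n -> {set C}) (W : {set C}) (B : R) : Prop :=
  exists p : 'I_n -> C -> R,
    (forall i c, 0 <= p i c) /\
        (forall i c, c \notin A i -> p i c = 0) /\
        (forall i, \sum_(c : C) p i c <= B / n%:R) /\
        (forall c, c \in W -> \sum_(i : 'I_n) p i c = 1) /\
        (forall c, c \notin W -> \sum_(i : 'I_n) p i c = 0) /\
        (forall c, c \notin W ->
           \sum_(i in supporters A c) (B / n%:R - \sum_(c' : C) p i c') <= 1).

(* Main.v *)
Require Import Defs.
From mathcomp Require Import all_boot all_order all_algebra.
From mathcomp Require Import lra.
Import Order.TTheory GRing.Theory Num.Theory.
Local Open Scope ring_scope.

Lemma card_bigcup_le (I T : finType) (P : pred I) (F : I -> {set T}) :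
  (#|\bigcup_(i | P i) F i| <= \sum_(i | P i) #|F i|)%N.
Proof.
elim/big_rec2: _ => [|c n U _ leUn]; first by rewrite cards0.
by rewrite (leq_trans (leq_card_setU _ U).1) ?leq_add2l.
Qed.

Theorem theorem11 (R : realFieldType) (C : finType) (n : nat)
  (A : 'I_n -> {set C}) (k : nat) (W : {set C}) (B : R) :
  (0 < #|C|)%N -> (1 <= k)%N -> (k <= #|C|)%N ->
  #|W| = k ->
  k%:R <= B ->
  priceable A W B ->
  (0 < max_cov A k)%N ->
  1 / 2 <= representation_ratio R A k W.
Proof.
move=> _ k1 _ hW hkB [p [p0 [pA [pB [pW [pN pL]]]]]] hmax.
set d := B / n%:R.
have [W' hW'k hWeq] : {W' : {set C} | W' \in [pred X : {set C} | #|X| == k]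
      & max_cov A k = cov A W'}.
  rewrite /max_cov; apply: eq_bigmax_cond.
  rewrite lt0n; apply/negP => /eqP/card0_eq h; move: hmax.
  by rewrite /max_cov big_pred0.
move: hW'k; rewrite inE => /eqP hW'k.
set S := [set i | A i :&: W != set0].
set T := [set i | A i :&: W' != set0].
set U := ~: S.
have hn : (0 < n)%N.
  move: hmax; rewrite hWeq /cov => h; apply: (leq_trans h).
  by rewrite -[X in (_ <= X)%N](card_ord n) max_card.
have dpos : 0 < d.
  rewrite /d divr_gt0 ?ltr0n //; apply: lt_le_trans hkB; by rewrite ltr0n.
have pU : forall i c, i \in U -> p i c = 0.
  move=> i c; rewrite in_setC inE negbK => /eqP hi.
  case: (boolP (c \in A i)) => hc; last by apply pA.
  have cW : c \notin W.
    apply/negP => cW; have : c \in A i :&: W by rewrite inE hc cW.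
    by rewrite hi inE.
  have := pN c cW; move/psumr_eq0P => H; apply: H => // j _.
have hk : k%:R <= #|S|%:R * d.
  have -> : k%:R = \sum_(c in W) \sum_i p i c.
    rewrite (eq_bigr (fun _ => 1)); last by move=> c cW; exact: pW.
    by rewrite sumr_const hW.
  rewrite exchange_big (bigID (fun i => i \in S)) /=.
  rewrite [X in _ + X]big1 ?addr0; last first.
    by move=> i iS; apply: big1 => c _; apply: pU; rewrite in_setC.
  rewrite mulr_natl -sumr_const; apply: ler_sum => i _.
  apply: le_trans (pB i); rewrite [X in _ <= X](bigID (fun c => c \in W)) /=.
  by rewrite lerDl sumr_ge0.
have hc : forall c, c \notin W ->
    #|[set i in U | c \in A i]|%:R * d <= 1.
  move=> c cW; apply: le_trans (pL c cW).
  rewrite (bigID (fun i => i \in U)) /=.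
  have -> : \sum_(i in supporters A c | i \in U) (d - \sum_c' p i c') =
            \sum_(i in [set i in U | c \in A i]) d.
    apply: eq_big => i; first by rewrite !inE andbC.
    move=> /andP [_ iU]; rewrite big1 ?subr0 //.
    by move=> c' _; apply: pU.
  rewrite sumr_const mulr_natl lerDl sumr_ge0 // => i _.
  by rewrite subr_ge0 pB.
have h0 : forall c, c \in W -> [set i in U | c \in A i] = set0.
  move=> c cW; apply/setP => i; rewrite !inE negbK.
  apply/negP => /andP [/eqP hi ci].
  have : c \in A i :&: W by rewrite inE ci cW.
  by rewrite hi inE.
have hT : (#|T| <= #|S| + \sum_(c in W') #|[set i in U | c \in A i]|)%N.
  rewrite -(cardsID S T) leq_add //.
    by apply: subset_leq_card; apply: subsetIr.
  apply: leq_trans (card_bigcup_le _ _ (fun c => c \in W') (fun c => [set i in U | c \in A i])) ; apply: subset_leq_card.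
  apply/subsetP => i; rewrite !inE => /andP [iS iT].
  case/set0Pn: iT => c; rewrite inE => /andP [ci cW'].
  apply/bigcupP; exists c => //; by rewrite !inE iS.
have hsum : (\sum_(c in W') #|[set i in U | c \in A i]|)%:R <= #|S|%:R :> R.
  rewrite -(ler_pM2r dpos); apply: le_trans hk.
  rewrite natr_sum mulr_suml -hW'k -[X in _ <= X%:R]sum1_card natr_sum.
  apply: ler_sum => c _.
  case: (boolP (c \in W)) => cW; last by apply: hc.
  by rewrite h0 // cards0 mul0r.
have hT2 : (#|T|%:R : R) <= 2 * #|S|%:R.
  apply: le_trans (_ : (#|S| + \sum_(c in W') #|[set i in U | c \in A i]|)%:R <= _).
    by rewrite ler_nat.
  by rewrite natrD mulr2n mulrDl mul1r lerD2l.
have Tpos : (0 : R) < #|T|%:R by rewrite ltr0n -[#|T|]/(cov A W') -hWeq.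
rewrite /representation_ratio hWeq /cov -/S -/T.
rewrite ler_pdivlMr //; lra.
Qed.
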